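(* Let $\alpha>-1$ and $s\in\mathbb N$. Then for every integer $n\ge s$, $$J_n^{(\alpha,-s)}(u)=\frac{(n-s)!}{n!}\,(1+u)^s\,\widehat P_{n-s}^{(\alpha,s)}(u),$$ and consequently, for $n\ge s$, $$J_n^{(\alpha,-s)}(u)=\frac{(-1)^s2^s}{(-\alpha-n)_s}\,A_{n-s}^{(\alpha,s)}\,P_n^{(\alpha,-s)}(u).$$
   Context: $(a)_k=a(a+1)\cdots(a+k-1)$ is the Pochhammer symbol. For real parameters $\alpha,\beta$ and $n\in\mathbb N_0$, the Jacobi polynomial is $P_n^{(\alpha,\beta)}(u)=\sum_{k=0}^n\frac{(\alpha+k+1)_{n-k}\,(-n)_k\,(n+\alpha+\beta+1)_k}{n!\,k!}\left(\frac{1-u}{2}\right)^k$ (i.e. $\frac{(\alpha+1)_n}{n!}{}_2F_1(-n,n+\alpha+\beta+1;\alpha+1;\frac{1-u}{2})$, defined for all real parameters). Whenever $(n+\alpha+\beta+1)_n\neq0$ put $A_n^{(\alpha,\beta)}=\frac{2^n}{(n+\alpha+\beta+1)_n}$ and $\widehat P_n^{(\alpha,\beta)}=A_n^{(\alpha,\beta)}P_n^{(\alpha,\beta)}$. For $s\in\mathbb N$ and $\alpha>-1-s$, define polynomials $J_n^{(\alpha,-s)}$, $n\in\mathbb N_0$, by $J_n^{(\alpha,-s)}(u)=\frac{(u+1)^n}{n!}$ for $0\le n\le s-1$ and $J_n^{(\alpha,-s)}(u)=\int_{-1}^{u}\frac{(u-w)^{s-1}}{(s-1)!}\,\widehat P_{n-s}^{(\alpha+s,0)}(w)\,\mathrm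 dw$ for $n\ge s$. *)

(* Defs.v *)
From Stdlib Require Import Reals.
From Coquelicot Require Import Coquelicot.
Open Scope R_scope.

Fixpoint poch (a : R) (k : nat) : R :=
  match k with
  | O => 1
  | S k' => poch a k' * (a + INR k')
  end.

Definition jacobiP (alpha beta : R) (n : nat) (u : R) : R :=
  sum_f_R0 (fun k =>
      poch (alpha + INR k + 1) (n - k) * poch (- INR n) k
      * poch (INR n + alpha + beta + 1) k / (INR (Factorial.fact n) * INR (Factorial.fact k))
      * ((1 - u) / 2) ^ k) n.

Definition jacA (alpha beta : R) (n : nat) : R :=
  2 ^ n / poch (INR n + alpha + beta + 1) n.

Definition jacobiPhat (alpha beta : R) (n : nat) (u : R) : R :=
  jacA alpha beta n * jacobiP alpha beta n u.

Definition jacJ (alpha : R) (s n : nat) (u : R) : R :=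
  if (n <? s)%nat then (u + 1) ^ n / INR (Factorial.fact n)
  else RInt (fun w => (u - w) ^ (s - 1) / INR (Factorial.fact (s - 1))
                      * jacobiPhat (alpha + INR s) 0 (n - s) w) (-1) u.

(* Main.v *)
Require Import Defs.
From Stdlib Require Import Reals Lra Lia.
From Coquelicot Require Import Coquelicot.
Open Scope R_scope.

Lemma dfix (f : R -> R) (x l l' : R) : is_derive f x l -> l = l' -> is_derive f x l'.
Proof. intros H <-; exact H. Qed.

Lemma dmult (f g : R -> R) (x a b : R) : is_derive f x a -> is_derive g x b ->
  is_derive (fun t => f t * g t) x (a * g x + f x * b).
Proof. intros Ha Hb. apply (is_derive_mult f g x a b Ha Hb). intros; apply Rmult_comm. Qed.

Lemma dplus (f g : R -> R) (x a b : R) : is_derive f x a -> is_derive g x b ->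
  is_derive (fun t => f t + g t) x (a + b).
Proof. intros Ha Hb. apply (is_derive_plus f g x a b Ha Hb). Qed.

Lemma dconst (c x : R) : is_derive (fun _ => c) x 0.
Proof. apply (is_derive_const c x). Qed.

Lemma did (x : R) : is_derive (fun t => t) x 1.
Proof. apply (is_derive_id x). Qed.

Lemma dcomp (f g : R -> R) (x a b : R) : is_derive f (g x) a -> is_derive g x b ->
  is_derive (fun t => f (g t)) x (b * a).
Proof. intros Ha Hb. apply (is_derive_comp f g x a b Ha Hb). Qed.

Lemma dpow (f : R -> R) (n : nat) (x l : R) : is_derive f x l -> is_derive (fun t => f t ^ n) x (INR n * l * f x ^ pred n).
Proof. apply is_derive_pow. Qed.

Lemma poch_S_head x k : poch x (S k) = x * poch (x + 1) k.
Proof.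
  revert x; induction k; intros x.
  - simpl; ring.
  - change (poch x (S (S k))) with (poch x (S k) * (x + INR (S k))).
    rewrite IHk. change (poch (x+1) (S k)) with (poch (x+1) k * (x + 1 + INR k)).
    rewrite S_INR. ring.
Qed.

Lemma poch_neg_zero n k : (n < k)%nat -> poch (- INR n) k = 0.
Proof.
  induction k; intros H; [lia|]. simpl.
  destruct (Nat.eq_dec n k) as [->|Hne].
  - ring.
  - rewrite IHk by lia. ring.
Qed.

Lemma poch_add x j s : poch x (j + s) = poch x j * poch (x + INR j) s.
Proof.
  induction s.
  - rewrite Nat.add_0_r; simpl; ring.
  - rewrite Nat.add_succ_r; simpl. rewrite IHs, plus_INR. ring.
Qed.

Lemma poch_neg y s : poch (- y) s = (-1) ^ s * poch (y - INR s + 1) s.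
Proof.
  revert y; induction s; intros y.
  - simpl; ring.
  - simpl poch at 1. rewrite IHs.
    rewrite poch_S_head.
    replace (y - INR (S s) + 1 + 1) with (y - INR s + 1) by (rewrite S_INR; ring).
    rewrite S_INR. simpl. ring.
Qed.

Lemma poch_nonzero x k : (forall i, (i < k)%nat -> x + INR i <> 0) -> poch x k <> 0.
Proof.
  induction k; intros H; simpl.
  - lra.
  - apply Rmult_integral_contrapositive_currified; [apply IHk; intros; apply H; lia | apply H; lia].
Qed.

Lemma fact_nz n : INR (Factorial.fact n) <> 0.
Proof. apply not_0_INR, Factorial.fact_neq_0. Qed.

Definition pe (c : nat -> R) (N : nat) (x : R) : R := sum_f_R0 (fun k => c k * x ^ k) N.

Lemma pe_S c N x : pe c (S N) x = pe c N x + c (S N) * x ^ (S N).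
Proof. reflexivity. Qed.

Lemma pe_ext c d N x : (forall k, (k <= N)%nat -> c k = d k) -> pe c N x = pe d N x.
Proof.
  intros H; induction N.
  - unfold pe; simpl; rewrite H; auto.
  - rewrite !pe_S, IHN by (intros; apply H; lia). rewrite H; auto.
Qed.

Lemma pe_extend c N x : (forall k, (N < k)%nat -> c k = 0) -> forall M, (N <= M)%nat -> pe c M x = pe c N x.
Proof.
  intros H M HM; induction HM; auto.
  rewrite pe_S, IHHM, H by lia. ring.
Qed.

Lemma pe_plus c d N x : pe c N x + pe d N x = pe (fun k => c k + d k) N x.
Proof. induction N; [unfold pe; simpl; ring|]. rewrite !pe_S, <- IHN. ring. Qed.

Lemma pe_scal r c N x : r * pe c N x = pe (fun k => r * c k) N x.
Proof. induction N; [unfold pe; simpl; ring|]. rewrite !pe_S, <- IHN. ring. Qed.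

Lemma pe_shift c N x : x * pe c N x = pe (fun k => match k with O => 0 | S j => c j end) (S N) x.
Proof.
  induction N; [unfold pe; simpl; ring|].
  rewrite pe_S, Rmult_plus_distr_l, IHN, (pe_S _ (S N)). simpl. ring.
Qed.

Lemma pe_at0 c N : pe c N 0 = c 0%nat.
Proof. induction N; [unfold pe; simpl; ring|]. rewrite pe_S, IHN. simpl. ring. Qed.

Lemma pe_derive c N x : is_derive (pe c (S N)) x (pe (fun k => INR (S k) * c (S k)) N x).
Proof.
  induction N.
  - unfold pe; simpl.
    eapply dfix. apply dplus. apply dconst. apply dmult. apply dconst. apply dmult. apply did. apply dconst.
    simpl. ring.
  - eapply is_derive_ext. intros t; symmetry; apply pe_S.
    eapply dfix. apply dplus. apply IHN. apply dmult. apply dconst. apply dpow. apply did.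
    rewrite (pe_S _ N). simpl pred. ring.
Qed.


Definition jc (a b : R) (n k : nat) : R :=
  poch (a + INR k + 1) (n - k) * poch (- INR n) k
      * poch (INR n + a + b + 1) k / (INR (Factorial.fact n) * INR (Factorial.fact k)).

Lemma jacobiP_pe a b n u : jacobiP a b n u = pe (jc a b n) n ((1 - u) / 2).
Proof. reflexivity. Qed.

Lemma jc_zero a b n k : (n < k)%nat -> jc a b n k = 0.
Proof. intros H; unfold jc; rewrite poch_neg_zero by exact H. unfold Rdiv; ring. Qed.

Lemma dlin (x : R) : is_derive (fun t => (1 - t) / 2) x (-(1/2)).
Proof. auto_derive; auto. field. Qed.
Lemma jacobiP_derive_pe a b n u :
  is_derive (jacobiP a b n) u (-(1/2) * pe (fun k => INR (S k) * jc a b n (S k)) n ((1 - u) / 2)).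
Proof.
  apply (is_derive_ext (fun t => pe (jc a b n) (S n) ((1-t)/2))).
  { intros t. rewrite jacobiP_pe.
  apply (pe_extend (jc a b n) n). intros; apply jc_zero; lia. lia. }
  eapply dfix. apply (dcomp (pe (jc a b n) (S n)) (fun t => (1 - t) / 2)).
  apply pe_derive. apply dlin. reflexivity.
Qed.

Lemma jc_L1 a b n' k :
  -(1/2) * (INR (S k) * jc a b (S n') (S k)) = (INR (S n') + a + b + 1) / 2 * jc (a + 1) (b + 1) n' k.
Proof.
  unfold jc.
  replace (S n' - S k)%nat with (n' - k)%nat by lia.
  rewrite (poch_S_head (- INR (S n'))), (poch_S_head (INR (S n') + a + b + 1)).
  replace (a + INR (S k) + 1) with (a + 1 + INR k + 1) by (rewrite S_INR; ring).
  replace (- INR (S n') + 1) with (- INR n') by (rewrite S_INR; ring).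
  replace (INR (S n') + a + b + 1 + 1) with (INR n' + (a + 1) + (b + 1) + 1) by (rewrite S_INR; ring).
  change (Factorial.fact (S n')) with (S n' * Factorial.fact n')%nat.
  change (Factorial.fact (S k)) with (S k * Factorial.fact k)%nat.
  rewrite !mult_INR.
  assert (INR (S n') <> 0) by (apply not_0_INR; lia).
  assert (INR (S k) <> 0) by (apply not_0_INR; lia).
  pose proof (fact_nz n'). pose proof (fact_nz k).
  field. repeat split; auto.
Qed.

Lemma jacobiP_derive a b n u : (1 <= n)%nat ->
  is_derive (jacobiP a b n) u ((INR n + a + b + 1) / 2 * jacobiP (a + 1) (b + 1) (n - 1) u).
Proof.
  intros Hn. destruct n as [|n']; [lia|].
  eapply dfix. apply jacobiP_derive_pe.
  replace (S n' - 1)%nat with n' by lia.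
  rewrite jacobiP_pe.
  rewrite <- (pe_extend (jc (a+1) (b+1) n') n' _ (fun k H => jc_zero _ _ _ _ H) (S n')) by lia.
  rewrite !pe_scal. rewrite pe_S. rewrite (pe_S (fun k => _ * jc _ _ _ k)).
  rewrite jc_zero by lia. rewrite jc_zero by lia.
  f_equal. apply pe_ext. intros; apply jc_L1. ring.
Qed.

Lemma jc_D1 a be m k :
  (be + INR k) * jc a be m k - INR (S k) * jc a be m (S k) = (INR m + be) * jc (a + 1) (be - 1) m k.
Proof.
  destruct (Compare_dec.lt_eq_lt_dec k m) as [[Hlt|Heq]|Hgt].
  - set (j := (m - S k)%nat).
    assert (E1 : (m - k)%nat = S j) by (unfold j; lia).
    assert (E2 : (m - S k)%nat = j) by reflexivity.
    assert (Em : INR m = INR k + INR j + 1) by (rewrite <- plus_INR, <- S_INR; f_equal; unfold j; lia).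
    unfold jc. rewrite E1, E2.
    rewrite (poch_S_head (a + INR k + 1)).
    change (poch (- INR m) (S k)) with (poch (- INR m) k * (- INR m + INR k)).
    change (poch (INR m + a + be + 1) (S k)) with (poch (INR m + a + be + 1) k * (INR m + a + be + 1 + INR k)).
    change (poch (a + 1 + INR k + 1) (S j)) with (poch (a + 1 + INR k + 1) j * (a + 1 + INR k + 1 + INR j)).
    replace (a + INR (S k) + 1) with (a + INR k + 1 + 1) by (rewrite S_INR; ring).
    replace (a + 1 + INR k + 1) with (a + INR k + 1 + 1) by ring.
    replace (INR m + (a + 1) + (be - 1) + 1) with (INR m + a + be + 1) by ring.
    change (Factorial.fact (S k)) with (S k * Factorial.fact k)%nat.
    rewrite !mult_INR.
    assert (INR (S k) <> 0) by (apply not_0_INR; lia).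
    pose proof (fact_nz m). pose proof (fact_nz k).
    set (P1 := poch (- INR m) k). set (P2 := poch (INR m + a + be + 1) k).
    set (Q := poch (a + INR k + 1 + 1) j).
    rewrite Em. rewrite S_INR. rewrite S_INR in H. field. repeat split; auto.
  - subst k. unfold jc. rewrite Nat.sub_diag.
    replace (m - S m)%nat with 0%nat by lia.
    change (poch (- INR m) (S m)) with (poch (- INR m) m * (- INR m + INR m)).
    replace (INR m + (a + 1) + (be - 1) + 1) with (INR m + a + be + 1) by ring.
    simpl poch at 1. simpl poch at 3. simpl poch at 5.
    pose proof (fact_nz m). pose proof (fact_nz (S m)).
    field. auto.
  - rewrite !jc_zero by lia. ring.
Qed.

Lemma pe_minus c d N x : pe c N x - pe d N x = pe (fun k => c k - d k) N x.
Proof. induction N; [unfold pe; simpl; ring|]. rewrite !pe_S, <- IHN. ring. Qed.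

Lemma D1_pe a be m x :
  be * pe (jc a be m) m x - (1 - x) * pe (fun k => INR (S k) * jc a be m (S k)) m x
  = (INR m + be) * pe (jc (a + 1) (be - 1) m) m x.
Proof.
  set (d := fun k => INR (S k) * jc a be m (S k)).
  replace ((1 - x) * pe d m x) with (pe d m x - x * pe d m x) by ring.
  rewrite pe_shift.
  assert (Hd : pe d m x = pe d (S m) x).
  { rewrite pe_S. replace (d (S m)) with 0 by (unfold d; rewrite jc_zero by lia; ring). ring. }
  rewrite Hd.
  rewrite <- (pe_extend (jc a be m) m x (fun k H => jc_zero _ _ _ _ H) (S m)) by lia.
  rewrite <- (pe_extend (jc (a+1) (be-1) m) m x (fun k H => jc_zero _ _ _ _ H) (S m)) by lia.
  rewrite !pe_scal, !pe_minus.
  apply pe_ext. intros k _. rewrite <- jc_D1. unfold d.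
  destruct k; simpl; ring.
Qed.


Lemma D1nat a b m u :
  is_derive (fun u => (1 + u) ^ (S b) * jacobiP a (INR (S b)) m u) u
    (INR (m + S b) * (1 + u) ^ b * jacobiP (a + 1) (INR b) m u).
Proof.
  eapply dfix. apply dmult. apply dpow. apply dplus. apply dconst. apply did.
  apply jacobiP_derive_pe.
  rewrite !jacobiP_pe.
  replace (jc (a + 1) (INR b) m) with (jc (a + 1) (INR (S b) - 1) m) by (f_equal; rewrite S_INR; ring).
  pose proof (D1_pe a (INR (S b)) m ((1 - u) / 2)) as H.
  rewrite plus_INR.
  replace ((INR m + INR (S b)) * (1 + u) ^ b * pe (jc (a + 1) (INR (S b) - 1) m) m ((1 - u) / 2))
    with ((1 + u) ^ b * ((INR m + INR (S b)) * pe (jc (a + 1) (INR (S b) - 1) m) m ((1 - u) / 2))) by ring.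
  rewrite <- H. simpl pred. change ((1 + u) ^ S b) with ((1 + u) * (1 + u) ^ b). field.
Qed.

Lemma jacobiP_at1 a b n : jacobiP a b n 1 = poch (a + 1) n / INR (Factorial.fact n).
Proof.
  rewrite jacobiP_pe. replace ((1 - 1) / 2) with 0 by field. rewrite pe_at0.
  unfold jc. rewrite Nat.sub_0_r. replace (a + INR 0 + 1) with (a + 1) by (simpl; ring).
  simpl poch at 2 3. change (Factorial.fact 0) with 1%nat. simpl INR. field. apply fact_nz.
Qed.

Lemma jacA_eq a b a' b' m : a + b = a' + b' -> jacA a b m = jacA a' b' m.
Proof. intros H; unfold jacA. replace (INR m + a + b + 1) with (INR m + a' + b' + 1) by lra. reflexivity. Qed.

Lemma dminus (f g : R -> R) (x a b : R) : is_derive f x a -> is_derive g x b ->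
  is_derive (fun t => f t - g t) x (a - b).
Proof.
  intros Ha Hb. apply (is_derive_ext (fun t => f t + (-1) * g t)). intros t. lra.
  eapply dfix. apply dplus. exact Ha. apply is_derive_scal. exact Hb. ring.
Qed.

Lemma const_deriv (f : R -> R) a b : (forall v, is_derive f v 0) -> f a = f b.
Proof.
  intros H. destruct (Rtotal_order a b) as [Hl|[He|Hg]].
  - apply (eq_is_derive f a b); auto.
  - subst; auto.
  - symmetry; apply (eq_is_derive f b a); auto.
Qed.

Lemma Cs s : forall al n u, (s <= n)%nat ->
  (-1) ^ s * 2 ^ s * jacobiP al (- INR s) n u
  = poch (- al - INR n) s * (INR (Factorial.fact (n - s)) / INR (Factorial.fact n)) * (1 + u) ^ s
    * jacobiP al (INR s) (n - s) u.
Proof.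
  induction s as [|s IH]; intros al n u Hn.
  - replace (- INR 0) with (INR 0) by (simpl; ring). rewrite Nat.sub_0_r.
    simpl poch. simpl pow. field. apply fact_nz.
  - destruct n as [|n']; [lia|].
    set (m := (n' - s)%nat).
    change (S n' - S s)%nat with m.
    set (K := poch (- al - INR (S n')) (S s) * (INR (Factorial.fact m) / INR (Factorial.fact (S n')))).
    set (L := fun v => (-1) ^ S s * 2 ^ S s * jacobiP al (- INR (S s)) (S n') v).
    set (Rf := fun v => K * ((1 + v) ^ S s * jacobiP al (INR (S s)) m v)).
    assert (HL : forall v, is_derive L v ((-1) ^ S s * 2 ^ S s *
        ((INR (S n') + al + - INR (S s) + 1) / 2 * jacobiP (al + 1) (- INR (S s) + 1) (S n' - 1) v))).
    { intros v. apply is_derive_scal. apply jacobiP_derive. lia. }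
    assert (HR : forall v, is_derive Rf v (K * (INR (m + S s) * (1 + v) ^ s * jacobiP (al + 1) (INR s) m v))).
    { intros v. apply is_derive_scal. apply D1nat. }
    assert (Hd : forall v, is_derive (fun v => L v - Rf v) v 0).
    { intros v. eapply dfix. apply dminus. apply HL. apply HR.
      replace (- INR (S s) + 1) with (- INR s) by (rewrite S_INR; ring).
      replace (S n' - 1)%nat with n' by lia.
      pose proof (IH (al + 1) n' v ltac:(lia)) as H.
      change (n' - s)%nat with m in H.
      replace (- (al + 1) - INR n') with (- al - INR (S n')) in H by (rewrite S_INR; ring).
      replace ((-1) ^ S s * 2 ^ S s *
        ((INR (S n') + al + - INR (S s) + 1) / 2 * jacobiP (al + 1) (- INR s) n' v))
        with (- (INR (S n') + al + - INR (S s) + 1) * ((-1) ^ s * 2 ^ s * jacobiP (al + 1) (- INR s) n' v))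
        by (simpl pow; field).
      rewrite H. unfold K.
      change (poch (- al - INR (S n')) (S s)) with (poch (- al - INR (S n')) s * (- al - INR (S n') + INR s)).
      replace (INR (m + S s)) with (INR (S n')) by (f_equal; unfold m; lia).
      change (Factorial.fact (S n')) with (S n' * Factorial.fact n')%nat.
      rewrite mult_INR.
      assert (INR (S n') <> 0) by (apply not_0_INR; lia).
      pose proof (fact_nz n').
      rewrite (S_INR s). rewrite (S_INR n') in *.
      field. auto. }
    assert (Hc := const_deriv _ u 1 Hd). simpl in Hc.
    assert (E : L u = Rf u).
    { assert (L 1 = Rf 1).
      { unfold L, Rf, K. rewrite !jacobiP_at1.
        assert (Hnm : S n' = (m + S s)%nat) by (unfold m; lia).
        replace (poch (al + 1) (S n')) with (poch (al + 1) (m + S s)) by (rewrite <- Hnm; reflexivity). rewrite poch_add.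
        replace (- al - INR (S n')) with (- (al + INR (S n'))) by ring.
        rewrite poch_neg.
        replace (al + INR (S n') - INR (S s) + 1) with (al + 1 + INR m)
          by (rewrite Hnm, plus_INR; ring).
        replace (1 + 1) with 2 by ring.
        pose proof (fact_nz m). pose proof (fact_nz (S n')).
        field. auto. }
      lra. }
    unfold L, Rf in E. rewrite E. ring.
Qed.


Definition FF (al : R) (s m j : nat) (w : R) : R :=
  INR (Factorial.fact m) / INR (Factorial.fact (m + (s - j)))
  * ((1 + w) ^ (s - j) * jacobiPhat (al + INR j) (INR (s - j)) m w).

Lemma FF_deriv al s m j w : (j < s)%nat -> is_derive (FF al s m j) w (FF al s m (S j) w).
Proof.
  intros H. set (b := (s - S j)%nat). assert (E : (s - j)%nat = S b) by (unfold b; lia).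
  unfold FF. rewrite E. fold b. unfold jacobiPhat.
  set (c := INR (Factorial.fact m) / INR (Factorial.fact (m + S b))).
  set (A := jacA (al + INR j) (INR (S b)) m).
  apply (is_derive_ext (fun w => (c * A) * ((1 + w) ^ S b * jacobiP (al + INR j) (INR (S b)) m w))).
  { intros t. lra. }
  eapply dfix. apply is_derive_scal. apply D1nat.
  replace (al + INR (S j)) with (al + INR j + 1) by (rewrite S_INR; ring).
  rewrite (jacA_eq (al + INR j + 1) (INR b) (al + INR j) (INR (S b))) by (rewrite S_INR; ring).
  fold A. unfold c.
  rewrite Nat.add_succ_r.
  change (Factorial.fact (S (m + b))) with (S (m + b) * Factorial.fact (m + b))%nat.
  rewrite mult_INR.
  assert (INR (S (m + b)) <> 0) by (apply not_0_INR; lia).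
  pose proof (fact_nz (m + b)).
  field. auto.
Qed.

Lemma dlin3 (u w : R) : is_derive (fun w => u - w) w (-1).
Proof. auto_derive; auto. Qed.

Lemma term_deriv al s m u j w : (j < s)%nat ->
  is_derive (fun w => (u - w) ^ j / INR (Factorial.fact j) * FF al s m j w) w
   ((- INR j * (u - w) ^ (pred j)) / INR (Factorial.fact j) * FF al s m j w
    + (u - w) ^ j / INR (Factorial.fact j) * FF al s m (S j) w).
Proof.
  intros H.
  apply (is_derive_ext (fun w => / INR (Factorial.fact j) * ((u - w) ^ j * FF al s m j w))).
  { intros t. unfold Rdiv. lra. }
  eapply dfix. apply is_derive_scal. apply dmult. apply dpow. apply dlin3. apply FF_deriv; auto.
  unfold Rdiv. ring.
Qed.

Definition TT al s m u K w := sum_f_R0 (fun j => (u - w) ^ j / INR (Factorial.fact j) * FF al s m j w) K.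

Lemma TT_deriv al s m u K w : (K < s)%nat ->
  is_derive (TT al s m u K) w ((u - w) ^ K / INR (Factorial.fact K) * FF al s m (S K) w).
Proof.
  revert w. induction K; intros w H.
  - apply (is_derive_ext (fun w => (u - w) ^ 0 / INR (Factorial.fact 0) * FF al s m 0 w)).
    { intros t. reflexivity. }
    eapply dfix. apply term_deriv. auto. simpl. field.
  - apply (is_derive_ext (fun w => TT al s m u K w + (u - w) ^ S K / INR (Factorial.fact (S K)) * FF al s m (S K) w)).
    { intros t. reflexivity. }
    eapply dfix. apply dplus. apply IHK. lia. apply term_deriv. auto.
    simpl pred.
    change (Factorial.fact (S K)) with (S K * Factorial.fact K)%nat.
    rewrite mult_INR.
    assert (INR (S K) <> 0) by (apply not_0_INR; lia).
    pose proof (fact_nz K).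
    field. auto.
Qed.

Lemma TT_u al s m u K : TT al s m u K u = FF al s m 0 u.
Proof.
  induction K.
  - unfold TT; simpl. field.
  - unfold TT in *. change (sum_f_R0 (fun j => (u - u) ^ j / INR (Factorial.fact j) * FF al s m j u) (S K))
      with (sum_f_R0 (fun j => (u - u) ^ j / INR (Factorial.fact j) * FF al s m j u) K
            + (u - u) ^ S K / INR (Factorial.fact (S K)) * FF al s m (S K) u).
    rewrite IHK. replace (u - u) with 0 by ring. rewrite pow_i by lia. unfold Rdiv. ring.
Qed.

Lemma FF_m1 al s m j : (j < s)%nat -> FF al s m j (-1) = 0.
Proof.
  intros H. unfold FF. replace (1 + -1) with 0 by ring. rewrite pow_i by lia. ring.
Qed.

Lemma TT_m1 al s m u K : (K < s)%nat -> TT al s m u K (-1) = 0.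
Proof.
  induction K; intros H.
  - unfold TT; simpl. rewrite FF_m1 by lia. ring.
  - unfold TT in *. change (sum_f_R0 (fun j => (u - -1) ^ j / INR (Factorial.fact j) * FF al s m j (-1)) (S K))
      with (sum_f_R0 (fun j => (u - -1) ^ j / INR (Factorial.fact j) * FF al s m j (-1)) K
            + (u - -1) ^ S K / INR (Factorial.fact (S K)) * FF al s m (S K) (-1)).
    rewrite IHK by lia. rewrite FF_m1 by lia. ring.
Qed.


Lemma part1 (alpha : R) (s : nat) (Hs : (1 <= s)%nat) (n : nat) (Hn : (s <= n)%nat) (u : R) :
  jacJ alpha s n u
    = INR (Factorial.fact (n - s)) / INR (Factorial.fact n) * (1 + u) ^ s * jacobiPhat alpha (INR s) (n - s) u.
Proof.
  unfold jacJ. replace (n <? s)%nat with false by (symmetry; apply Nat.ltb_ge; lia).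
  set (m := (n - s)%nat).
  assert (Hd : forall w, is_derive (TT alpha s m u (s - 1)) w
      ((u - w) ^ (s - 1) / INR (Factorial.fact (s - 1)) * FF alpha s m s w)).
  { intros w. eapply dfix. apply TT_deriv. lia. do 3 f_equal. lia. }
  assert (HI : is_RInt (fun w => (u - w) ^ (s - 1) / INR (Factorial.fact (s - 1)) * FF alpha s m s w) (-1) u
                 (minus (TT alpha s m u (s - 1) u) (TT alpha s m u (s - 1) (-1)))).
  { apply (is_RInt_derive (TT alpha s m u (s - 1)) (fun w => (u - w) ^ (s - 1) / INR (Factorial.fact (s - 1)) * FF alpha s m s w)). intros; apply Hd.
    intros x _. apply (@ex_derive_continuous R_AbsRing R_NormedModule).
    eexists. apply dmult.
    apply (is_derive_ext (fun w => / INR (Factorial.fact (s - 1)) * (u - w) ^ (s - 1))).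
    { intros t. unfold Rdiv. lra. }
    apply is_derive_scal. apply dpow. apply dlin3.
    unfold FF. rewrite Nat.sub_diag. unfold jacobiPhat.
    apply is_derive_scal. apply dmult. apply dpow. apply dplus. apply dconst. apply did.
    apply is_derive_scal. apply jacobiP_derive_pe. }
  assert (HF : forall w, FF alpha s m s w = jacobiPhat (alpha + INR s) 0 m w).
  { intros w. unfold FF. rewrite Nat.sub_diag, Nat.add_0_r. simpl (INR 0). simpl pow.
    pose proof (fact_nz m). field. auto. }
  assert (HI' : is_RInt (fun w => (u - w) ^ (s - 1) / INR (Factorial.fact (s - 1)) * jacobiPhat (alpha + INR s) 0 m w) (-1) u
                 (minus (TT alpha s m u (s - 1) u) (TT alpha s m u (s - 1) (-1)))).
  { eapply is_RInt_ext; [|exact HI]. intros x _. cbv beta. rewrite HF. reflexivity. }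
  rewrite (is_RInt_unique _ _ _ _ HI').
  change (minus (TT alpha s m u (s - 1) u) (TT alpha s m u (s - 1) (-1)))
      with (TT alpha s m u (s - 1) u - TT alpha s m u (s - 1) (-1)).
  rewrite TT_u, TT_m1 by lia.
  unfold FF. rewrite Nat.sub_0_r. replace (alpha + INR 0) with alpha by (simpl; ring).
  replace (m + s)%nat with n by (unfold m; lia). ring.
Qed.

Theorem mainTheorem1 (alpha : R) (s : nat) (Halpha : -1 < alpha) (Hs : (1 <= s)%nat)
  (n : nat) (Hn : (s <= n)%nat) (u : R) :
  jacJ alpha s n u
    = INR (Factorial.fact (n - s)) / INR (Factorial.fact n) * (1 + u) ^ s * jacobiPhat alpha (INR s) (n - s) u
  /\
  jacJ alpha s n u
    = (-1) ^ s * 2 ^ s / poch (- alpha - INR n) s * jacA alpha (INR s) (n - s)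
      * jacobiP alpha (- INR s) n u.
Proof.
  split; [apply part1; auto|].
  rewrite part1 by auto.
  assert (Hp : poch (- alpha - INR n) s <> 0).
  { apply poch_nonzero. intros i Hi.
    assert (INR i + 1 <= INR n) by (rewrite <- S_INR; apply le_INR; lia). lra. }
  replace ((-1) ^ s * 2 ^ s / poch (- alpha - INR n) s * jacA alpha (INR s) (n - s) * jacobiP alpha (- INR s) n u)
    with (jacA alpha (INR s) (n - s) / poch (- alpha - INR n) s * ((-1) ^ s * 2 ^ s * jacobiP alpha (- INR s) n u))
    by (field; auto).
  rewrite (Cs s alpha n u Hn). unfold jacobiPhat. field. split; [apply fact_nz | exact Hp].
Qed.
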